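(* In a two-intervention factorial stepped-wedge trial (as defined in the context), assuming the matrix $\sum_i\mathbf X_i'\Sigma^{-1}\mathbf X_i-\mathbf S\bar{\mathbf X}$ is invertible, the $2\times 2(T-1)$ matrix $$\mathbf H=\Big[\sum_{i}\mathbf X_i'\Sigma^{-1}\mathbf X_i-\mathbf S\bar{\mathbf X}\Big]^{-1}\Big[\sum_{i}\mathbf X_i'\Sigma^{-1}\mathbf Z_i-\mathbf S\bar{\mathbf Z}\Big]$$ (for which $\mathrm E(\hat\theta)=\mathbf H\delta$ whenever $\mathrm E(\bar{\mathbf y}_i)=\beta+\mathbf Z_i\delta$) has the block form $$\mathbf H=\begin{pmatrix}\mathbf h_1'&\mathbf h_2'\\ \mathbf h_2'&\mathbf h_1'\end{pmatrix}$$ for some row vectors $\mathbf h_1',\mathbf h_2'$ of length $T-1$. Hence $\mathrm E(\hat\theta_1)=\mathbf h_1'\delta_1+\mathbf h_2'\delta_2$ and $\mathrm E(\hat\theta_2)=\mathbf h_2'\delta_1+\mathbf h_1'\delta_2$.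
   Context: A two-intervention ($m=2$) stepped-wedge trial with $T$ periods, $I$ clusters, common cluster-period size $n$. $x_{kij}\in\{0,1\}$ indicates intervention $k$ in cluster $i$ at period $j$, with $x_{ki1}=0$ and $x_{kij}$ nondecreasing in $j$; each cluster starts under control and may add one intervention and later the other. The design is factorial in the sense that the clusters are partitioned into pairs $(i,i')$ whose allocations are mirror images: $x_{1ij}=x_{2i'j}$ and $x_{2ij}=x_{1i'j}$ for all $j$. Exposure time $e_{kij}=\sum_{j'\le j}x_{kij'}$. $\mathbf X_i$ is $T\times2$ with $(j,k)$ entry $x_{kij}$; $\mathbf Z_{k,i}$ is $T\times(T-1)$ with $(j,e)$ entry $1$ iff $e_{kij}=e$; $\mathbf Z_i=(\mathbf Z_{1,i},\mathbf Z_{2,i})$; $\bar{\mathbf Z}=\frac1I\sum_i\mathbf Z_i$, $\bar{\mathbf X}=\frac1I\sum_i\mathbf X_i$, $\mathbf S=\sum_i\mathbf X_i'\Sigma^{-1}$, $\Sigma=\sigma_\alpha^2\mathbf 1\mathbf 1'+(\sigma_\epsilon^2/n)\mathbf I_T$ the covariance of the cluster-period mean vector $\bar{\mathbf y}_i$. $\delta=(\delta_1',\delta_2')'$, $\delta_k\in\mathbb R^{T-1}$ exposure-time-specific effects. $\hat\theta=(\hat\theta_1,\hat\theta_2)'$ is the GLS estimator (known $\Sigma$) of $\theta$ in the working constant-effect model $\bar{\mathbf y}_i=\beta+\mathbf X_i\theta+\mathbf 1\alpha_i+\bar\epsilon_i$ with unrestricted $\beta\in\mathbb R^T$. *)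

(* Defs.v *)
From HB Require Import structures.
From mathcomp Require Import all_boot all_order all_algebra.
Set Implicit Arguments. Unset Strict Implicit. Unset Printing Implicit Defensive.
Import Order.TTheory GRing.Theory Num.Theory.
Local Open Scope ring_scope.

(* Design: x k i j  (k : intervention 'I_2, i : cluster 'I_I, j : period 'I_T;
   period with val 0 is the first period). *)
Section SW.
Variables (R : realFieldType) (T I : nat) (x : 'I_2 -> 'I_I -> 'I_T -> bool).

Definition expo (k : 'I_2) (i : 'I_I) (j : 'I_T) : nat :=
  \sum_(j' < T | (j' <= j)%N) (x k i j' : nat).

Definition Xmat (i : 'I_I) : 'M[R]_(T, 2) := \matrix_(j, k) (x k i j)%:R.

(* Z_{k,i} : T x (T-1), (j,e) entry 1 iff e_{kij} = e, with exposure times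
   e = 1..T-1 indexed by the ordinal e' : 'I_(T-1) with e = e'+1 *)
Definition Zk (k : 'I_2) (i : 'I_I) : 'M[R]_(T, T - 1) :=
  \matrix_(j, e) (expo k i j == e.+1)%:R.

Definition Zmat (i : 'I_I) : 'M[R]_(T, (T - 1) + (T - 1)) :=
  row_mx (Zk 0 i) (Zk 1 i).

Definition Xbar : 'M[R]_(T, 2) := (I%:R)^-1 *: \sum_i Xmat i.
Definition Zbar : 'M[R]_(T, (T - 1) + (T - 1)) := (I%:R)^-1 *: \sum_i Zmat i.

Definition Sigma (sa2 se2 : R) (n : nat) : 'M[R]_T :=
  sa2 *: const_mx 1 + (se2 / n%:R) *: 1%:M.

Definition Smat (Sig : 'M[R]_T) : 'M[R]_(2, T) :=
  \sum_i (Xmat i)^T *m invmx Sig.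

Definition Amat (Sig : 'M[R]_T) : 'M[R]_2 :=
  \sum_i (Xmat i)^T *m invmx Sig *m Xmat i - Smat Sig *m Xbar.

Definition Bmat (Sig : 'M[R]_T) : 'M[R]_(2, (T - 1) + (T - 1)) :=
  \sum_i (Xmat i)^T *m invmx Sig *m Zmat i - Smat Sig *m Zbar.

Definition Hmat (Sig : 'M[R]_T) : 'M[R]_(2, (T - 1) + (T - 1)) :=
  invmx (Amat Sig) *m Bmat Sig.
End SW.

(* Validity of a stepped-wedge allocation: everyone starts under control,
   treatment indicators are nondecreasing, and the two interventions are
   not added in the same period ("adds one intervention and later the other"). *)
Definition stepped_wedge (T I : nat) (x : 'I_2 -> 'I_I -> 'I_T -> bool) : Prop :=
  [/\ (forall k i j, val j = 0%N -> x k i j = false),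
      (forall k i (j j' : 'I_T), (j <= j')%N -> x k i j -> x k i j')
    & (forall i (j j' : 'I_T), val j' = j.+1 ->
        ~ (~~ x 0 i j && x 0 i j' && ~~ x 1 i j && x 1 i j'))].

Definition factorial_pairing (T I : nat) (x : 'I_2 -> 'I_I -> 'I_T -> bool)
  (p : 'I_I -> 'I_I) : Prop :=
  [/\ (forall i, p (p i) = i), (forall i, p i != i)
    & (forall i j, x 0 i j = x 1 (p i) j /\ x 1 i j = x 0 (p i) j)].

(* Main.v *)
Require Import Defs.
From HB Require Import structures.
From mathcomp Require Import all_boot all_order all_algebra.
Set Implicit Arguments. Unset Strict Implicit.
Import Order.TTheory GRing.Theory Num.Theory.
Local Open Scope ring_scope.

Lemma ord2_cases (k : 'I_2) : k = 0 \/ k = 1.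
Proof. case: k => [[|[|m]] Hk]; [left|right|] => //; exact/val_inj. Qed.
Lemma add01 : (0+1 : 'I_2) = 1. Proof. exact/val_inj. Qed.
Lemma add11 : (1+1 : 'I_2) = 0. Proof. exact/val_inj. Qed.
Lemma lsh0 (k : 'I_1) : lshift 1 k = 0 :> 'I_2.
Proof. by apply/val_inj; rewrite /= (ord1 k). Qed.
Lemma rsh1 (k : 'I_1) : rshift 1 k = 1 :> 'I_2.
Proof. by apply/val_inj; rewrite /= (ord1 k). Qed.

Section S.
Variables (R : realFieldType) (T I : nat) (x : 'I_2 -> 'I_I -> 'I_T -> bool) (p : 'I_I -> 'I_I).
Hypothesis pp : forall i, p (p i) = i.
Hypothesis px : forall i j, x 0 i j = x 1 (p i) j /\ x 1 i j = x 0 (p i) j.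

Definition Pm : 'M[R]_(1 + 1) := block_mx 0 1%:M 1%:M 0.
Definition Qm : 'M[R]_((T - 1) + (T - 1)) := block_mx 0 1%:M 1%:M 0.

Lemma PmT : Pm^T = Pm.
Proof. by rewrite /Pm tr_block_mx !trmx0 !trmx1. Qed.

Lemma PmK : Pm *m Pm = 1%:M.
Proof.
rewrite /Pm mulmx_block ?mulmx0 ?mulmx1 ?mul0mx ?mul1mx ?add0r ?addr0.
by rewrite -scalar_mx_block.
Qed.

Lemma QmK : Qm *m Qm = 1%:M.
Proof.
rewrite /Qm mulmx_block ?mulmx0 ?mulmx1 ?mul0mx ?mul1mx ?add0r ?addr0.
by rewrite -scalar_mx_block.
Qed.

Lemma x0p i j : x 0 (p i) j = x 1 i j.
Proof. by have [-> _] := px (p i) j; rewrite pp. Qed.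
Lemma x1p i j : x 1 (p i) j = x 0 i j.
Proof. by have [_ ->] := px (p i) j; rewrite pp. Qed.

Lemma XP i : Xmat R x (p i) = Xmat R x i *m Pm.
Proof.
rewrite -[Xmat R x i](@hsubmxK _ _ 1 1) -[Xmat R x (p i)](@hsubmxK _ _ 1 1).
rewrite /Pm (@mul_row_block _ T 1 1 1 1) !mulmx0 !mulmx1 addr0 add0r.
by apply: f_equal2; apply/matrixP=> j k; rewrite !mxE ?lsh0 ?rsh1 ?x0p ?x1p.
Qed.

Lemma expo_p k i j : expo x k (p i) j = expo x (k + 1) i j.
Proof.
rewrite /expo; apply: eq_bigr => j' _.
case: (ord2_cases k) => ->; rewrite ?x0p ?x1p.
all: by congr (x _ _ _); apply/val_inj.
Qed.

Lemma ZQ i : Zmat R x (p i) = Zmat R x i *m Qm.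
Proof.
rewrite /Zmat /Qm mul_row_block !mulmx0 !mulmx1 addr0 add0r.
congr row_mx; apply/matrixP=> j e; rewrite !mxE expo_p ?add01 ?add11 //.
Qed.

Lemma sum_p m n (F : 'I_I -> 'M[R]_(m, n)) : \sum_i F (p i) = \sum_i F i.
Proof. by rewrite [RHS](reindex_inj (can_inj pp)). Qed.

Lemma Xbar_P : Xbar R x *m Pm = Xbar R x.
Proof.
rewrite /Xbar -scalemxAl mulmx_suml; congr (_ *: _).
by rewrite -[RHS]sum_p; apply: eq_bigr => i _; rewrite XP.
Qed.

Lemma Zbar_Q : Zbar R x *m Qm = Zbar R x.
Proof.
rewrite /Zbar -scalemxAl mulmx_suml; congr (_ *: _).
by rewrite -[RHS]sum_p; apply: eq_bigr => i _; rewrite ZQ.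
Qed.

Variable Sig : 'M[R]_T.

Lemma S_P : Pm *m Smat x Sig = Smat x Sig.
Proof.
rewrite /Smat mulmx_sumr -[RHS]sum_p; apply: eq_bigr => i _.
by rewrite XP trmx_mul PmT mulmxA.
Qed.

Lemma A_P : Pm *m Amat x Sig *m Pm = Amat x Sig.
Proof.
rewrite /Amat mulmxBr mulmxBl; congr (_ - _).
  rewrite mulmx_sumr mulmx_suml -[RHS]sum_p; apply: eq_bigr => i _.
  by rewrite XP trmx_mul PmT !mulmxA.
by rewrite mulmxA -mulmxA S_P Xbar_P.
Qed.

Lemma B_P : Pm *m Bmat x Sig *m Qm = Bmat x Sig.
Proof.
rewrite /Bmat mulmxBr mulmxBl; congr (_ - _).
  rewrite mulmx_sumr mulmx_suml -[RHS]sum_p; apply: eq_bigr => i _.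
  by rewrite XP ZQ trmx_mul PmT !mulmxA.
by rewrite mulmxA -mulmxA S_P Zbar_Q.
Qed.

Hypothesis uA : Amat x Sig \in unitmx.

Lemma invA_P : Pm *m invmx (Amat x Sig) *m Pm = invmx (Amat x Sig).
Proof.
have h : Amat x Sig *m (Pm *m invmx (Amat x Sig) *m Pm) = 1%:M.
  rewrite -{1}A_P !mulmxA -(mulmxA _ Pm Pm) PmK mulmx1.
  by rewrite -(mulmxA Pm (Amat x Sig)) mulmxV // mulmx1 PmK.
by rewrite -[RHS]mulmx1 -h mulmxA mulVmx // mul1mx.
Qed.

Lemma H_P : Pm *m Hmat x Sig *m Qm = Hmat x Sig.
Proof.
rewrite /Hmat -[in RHS]invA_P -[in RHS]B_P !mulmxA.
by rewrite -(mulmxA _ Pm Pm) PmK mulmx1.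
Qed.
End S.

Theorem proposition2 (R : realFieldType) (T I : nat)
  (x : 'I_2 -> 'I_I -> 'I_T -> bool) (p : 'I_I -> 'I_I)
  (sa2 se2 : R) (n : nat) :
  stepped_wedge x -> factorial_pairing x p ->
  0 <= sa2 -> 0 < se2 -> (0 < n)%N ->
  Amat x (@Sigma R T sa2 se2 n) \in unitmx ->
  exists h1 h2 : 'rV[R]_(T - 1),
    Hmat x (@Sigma R T sa2 se2 n) = col_mx (row_mx h1 h2) (row_mx h2 h1) /\
    (forall d1 d2 : 'cV[R]_(T - 1),
      Hmat x (@Sigma R T sa2 se2 n) *m col_mx d1 d2
      = col_mx (h1 *m d1 + h2 *m d2) (h2 *m d1 + h1 *m d2)).
Proof.
move=> _ [pp _ px] _ _ _ uA.
have HP := H_P pp px uA.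
have E := submxK (Hmat x (@Sigma R T sa2 se2 n) : 'M_(1+1, (T-1)+(T-1))).
rewrite -E /Pm /Qm !mulmx_block in HP.
rewrite ?mulmx0 ?mul0mx ?mulmx1 ?mul1mx ?add0r ?addr0 in HP.
pose H : 'M[R]_(1+1, (T-1)+(T-1)) := Hmat x (@Sigma R T sa2 se2 n).
have [e1 e2 e3 e4] := eq_block_mx HP.
exists (ulsubmx H), (ursubmx H).
have EH : Hmat x (@Sigma R T sa2 se2 n) =
  col_mx (row_mx (ulsubmx H) (ursubmx H))
         (row_mx (ursubmx H) (ulsubmx H)).
  by apply: (etrans (esym E)); rewrite block_mxEv e1 e2.
split => // d1 d2.
by rewrite [in LHS]EH (@mul_col_mx _ 1 1) !mul_row_col.
Qed.
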